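(* Let $n\ge d\ge 2$ and let $\mathcal{C}_{n,d}$ be the complete $d$-uniform clutter on $[n]$. Then $\mathcal{C}_{n,d}$ is chordal and its $\lambda$-sequence is \[ \lambda_i(\mathcal{C}_{n,d})=\begin{cases}\binom{n-1-i}{d-2}, & i=1,\ldots,n-d+1,\\ 0, & \text{otherwise.}\end{cases} \]
   Context: $\mathcal{C}_{n,d}$ is the set of all $d$-subsets of $[n]$. For a $d$-uniform clutter $\mathcal{C}$ (set of $d$-subsets of $[n]$): a submaximal circuit is a $(d-1)$-set contained in some circuit; a clique is a set all of whose $d$-subsets are in $\mathcal{C}$; $\mathrm{N}_{\mathcal{C}}(e)=\{c: e\cup\{c\}\in\mathcal{C}\}$, $\mathrm{N}_{\mathcal{C}}[e]=e\cup\mathrm{N}_{\mathcal{C}}(e)$; $e$ is simplicial if it is a submaximal circuit and $\mathrm{N}_{\mathcal{C}}[e]$ is a clique. $\mathcal{C}\setminus e=\{F\in\mathcal{C}:e\not\subset F\}$; $\mathcal{C}_{e_1\cdots e_i}$ is successive deletion. A simplicial order is a sequence $e_1,\ldots,e_r$ with $e_i$ simplicial in $\mathcal{C}_{e_1\cdots e_{i-1}}$ (in $\mathcal{C}$ for $i=1$) and $\mathcal{C}_{e_1\cdots e_r}=\emptyset$; $\mathcal{C}$ is chordal if one exists. Its multiset is $\{N_1,\ldots,N_r\}$, $N_i=|\mathrm{N}_{\mathcal{C}_{e_1\cdots e_{i-1}}}(e_i)|$ (independent of the order), and $\lambda_i(\mathcal{C})=|\{j:N_j=i\}|$. *)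

(* Defs.v *)
From mathcomp Require Import all_boot.
Set Implicit Arguments. Unset Strict Implicit. Unset Printing Implicit Defensive.

Section Clutters.
Variable n : nat.
Notation clutter := {set {set 'I_n}}.

Definition complete_clutter (d : nat) : clutter := [set F : {set 'I_n} | #|F| == d].

Definition uniform (d : nat) (C : clutter) : bool := [forall F in C, #|F| == d].

Definition submaximal (d : nat) (C : clutter) (e : {set 'I_n}) : bool :=
  (#|e| == d.-1) && [exists F in C, e \subset F].

Definition clique (d : nat) (C : clutter) (K : {set 'I_n}) : bool :=
  [forall F : {set 'I_n}, ((F \subset K) && (#|F| == d)) ==> (F \in C)].

Definition nbh (C : clutter) (e : {set 'I_n}) : {set 'I_n} :=
  [set c | (c |: e) \in C].
Definition cnbh (C : clutter) (e : {set 'I_n}) : {set 'I_n} := e :|: nbh C e.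

Definition simplicial (d : nat) (C : clutter) (e : {set 'I_n}) : bool :=
  submaximal d C e && clique d C (cnbh C e).

Definition cdel (C : clutter) (e : {set 'I_n}) : clutter :=
  [set F in C | ~~ (e \subset F)].

Definition cdels (C : clutter) (s : seq {set 'I_n}) : clutter := foldl cdel C s.

Definition simplicial_order (d : nat) (C : clutter) (s : seq {set 'I_n}) : Prop :=
  (forall i, i < size s -> simplicial d (cdels C (take i s)) (nth set0 s i))
  /\ cdels C s = set0.

Definition chordal (d : nat) (C : clutter) : Prop := exists s, simplicial_order d C s.

(* N_i of the order s (index i starting at 0) *)
Definition order_N (C : clutter) (s : seq {set 'I_n}) (j : nat) : nat :=
  #|nbh (cdels C (take j s)) (nth set0 s j)|.

Definition lambda_of (C : clutter) (s : seq {set 'I_n}) (i : nat) : nat :=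
  count (fun j => order_N C s j == i) (iota 0 (size s)).

End Clutters.

(* Main.v *)
Require Import Defs.
From mathcomp Require Import all_boot zify.
Set Implicit Arguments. Unset Strict Implicit. Unset Printing Implicit Defensive.

Lemma cdelsE n (C : {set {set 'I_n}}) t F :
  (F \in cdels C t) = (F \in C) && all (fun e : {set 'I_n} => ~~ (e \subset F)) t.
Proof.
elim: t C => [|e t IH] C /=; first by rewrite andbT.
by rewrite IH /cdel inE andbA.
Qed.

Lemma hockey m a : \sum_(i < m.+1) 'C(i, a) = 'C(m.+1, a.+1).
Proof.
elim: m => [|m IH]; first by rewrite big_ord1; case: a => [|[|a]].
by rewrite big_ord_recr /= IH [in RHS]binS.
Qed.

Lemma vander m a b :
  \sum_(i < m.+1) 'C(m - i, b) * 'C(i, a) = 'C(m.+1, a + b + 1).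
Proof.
elim: b m => [|b IHb] m.
  rewrite (eq_bigr (fun i : 'I_m.+1 => 'C(i, a))) ?hockey ?addn0 ?addn1 //.
  by move=> i _; rewrite bin0 mul1n.
elim: m => [|m IHm].
  by rewrite big_ord1 bin0n /= mul0n addn1 addnS.
rewrite big_ord_recr /= subnn bin0n mul0n addn0.
rewrite (eq_bigr (fun i : 'I_m.+1 => 'C(m - i, b) * 'C(i, a) + 'C(m - i, b.+1) * 'C(i, a))).
  by rewrite big_split /= IHb IHm !addn1 !addnS binS addnC.
move=> i _; have hi : i <= m by rewrite -ltnS.
by rewrite subSn // binS mulnDl addnC.
Qed.

Lemma moment_uniq (a b : nat -> nat) M :
  (forall i, M < i -> a i = 0 /\ b i = 0) ->
  (forall k, 0 < k -> \sum_(i < M.+1) a i * 'C(i, k) = \sum_(i < M.+1) b i * 'C(i, k)) ->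
  forall i, 0 < i -> a i = b i.
Proof.
move=> h0 hm.
suff Q : forall t i, 0 < i -> M < i + t -> a i = b i.
  by move=> i hi; apply: (Q M.+1) => //; rewrite addnS ltnS leq_addl.
elim=> [|t IH] i hi.
  by rewrite addn0 => /h0 [-> ->].
rewrite addnS ltnS leq_eqVlt => /orP [/eqP hM|]; last exact: IH.
have hiM : i < M.+1 by rewrite ltnS hM leq_addr.
have := hm i hi; rewrite (bigD1 (Ordinal hiM)) //= [RHS](bigD1 (Ordinal hiM)) //=.
rewrite binn !muln1 (eq_bigr (fun j : 'I_M.+1 => b j * 'C(j, i))).
  by move/eqP; rewrite eqn_add2r => /eqP.
move=> j /= hj; case: (ltngtP j i) => hji.
- by rewrite bin_small // !muln0.
- by rewrite IH //; [apply: ltn_trans hji | apply: (@leq_trans (i + t).+1); [rewrite -hM | rewrite ltn_add2r]].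
- by move: hj; rewrite -val_eqE /= hji eqxx.
Qed.

Definition es n (s : seq {set 'I_n}) j := nth set0 s j.
Definition Cj n d (s : seq {set 'I_n}) j := cdels (complete_clutter n d) (take j s).
Definition Nj n d (s : seq {set 'I_n}) j := nbh (Cj d s j) (es s j).

Lemma Cj_card n d (s : seq {set 'I_n}) j (F : {set 'I_n}) : F \in Cj d s j -> #|F| = d.
Proof. by rewrite /Cj cdelsE inE => /andP [/eqP]. Qed.

Lemma Cj_avoid n d (s : seq {set 'I_n}) j j' (F : {set 'I_n}) :
  F \in Cj d s j -> j' < j -> j' < size s -> ~~ (es s j' \subset F).
Proof.
rewrite /Cj cdelsE => /andP [_ /(all_nthP set0) H] hj hs.
have := H j'; rewrite size_take_min leq_min hj hs nth_take //; exact.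
Qed.

Lemma Cj_intro n d (s : seq {set 'I_n}) j (F : {set 'I_n}) : #|F| = d ->
  (forall j', j' < j -> j' < size s -> ~~ (es s j' \subset F)) -> F \in Cj d s j.
Proof.
move=> hF H; rewrite /Cj cdelsE inE hF eqxx /=.
apply/(all_nthP set0) => j'; rewrite size_take_min leq_min => /andP [h1 h2].
rewrite nth_take //; exact: H.
Qed.


Lemma es_card n d (s : seq {set 'I_n}) j :
  simplicial_order d (complete_clutter n d) s -> j < size s -> #|es s j| = d.-1.
Proof.
by move=> [hs _] hj; have /andP [/andP [/eqP -> _] _] := hs j hj.
Qed.

Lemma Nj_not n d (s : seq {set 'I_n}) j (c : 'I_n) : 2 <= d ->
  simplicial_order d (complete_clutter n d) s -> j < size s ->
  c \in Nj d s j -> c \notin es s j /\ c |: es s j \in Cj d s j.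
Proof.
move=> hd hs hj; rewrite inE => hc; split => //.
apply/negP => ce; move/Cj_card: hc; rewrite (setUidPr _); last by rewrite sub1set.
by rewrite (es_card hs hj) => h; move: (ltn_predL d); rewrite h ltnn (ltnW hd).
Qed.

Lemma Nj_clique n d (s : seq {set 'I_n}) j (F : {set 'I_n}) :
  simplicial_order d (complete_clutter n d) s -> j < size s ->
  F \subset es s j :|: Nj d s j -> #|F| = d -> F \in Cj d s j.
Proof.
move=> [hs _] hj hF hc; have /andP [_ /forallP /(_ F)] := hs j hj.
by rewrite hF hc eqxx.
Qed.

Lemma Nj_gt0 n d (s : seq {set 'I_n}) j : 2 <= d ->
  simplicial_order d (complete_clutter n d) s -> j < size s -> 0 < #|Nj d s j|.
Proof.
move=> hd hs hj; have [hs1 _] := hs.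
have /andP [/andP [_ /existsP [F /andP [FC eF]]] _] := hs1 j hj.
have hF := Cj_card FC; have he := es_card hs hj.
have : 0 < #|F :\: es s j|.
  by rewrite cardsDS // he hF subn_gt0 ltn_predL (ltnW hd).
rewrite card_gt0 => /set0Pn [c]; rewrite inE => /andP [ce cF].
apply/card_gt0P; exists c; rewrite inE; apply: Cj_intro.
  by rewrite cardsU1 ce he add1n prednK // (ltnW hd).
move=> j' hj' hj's; apply/negP => hsub.
have := Cj_avoid FC hj' hj's; rewrite (subset_trans hsub) //.
by rewrite subUset sub1set cF eF.
Qed.

Lemma cover_es n d (s : seq {set 'I_n}) (F : {set 'I_n}) :
  simplicial_order d (complete_clutter n d) s -> #|F| = d ->
  exists2 j, j < size s & es s j \subset F.
Proof.
move=> [_ he] hF.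
have : F \notin cdels (complete_clutter n d) s by rewrite he inE.
rewrite cdelsE inE hF eqxx /= => /allPn [e es' /negbNE eF].
exists (index e s); first by rewrite index_mem.
by rewrite /es nth_index.
Qed.

Lemma Nj_disj n d (s : seq {set 'I_n}) j (S : {set 'I_n}) : 2 <= d ->
  simplicial_order d (complete_clutter n d) s -> j < size s ->
  S \subset Nj d s j -> es s j :&: S = set0.
Proof.
move=> hd hs hj hS; apply/setP => x; rewrite !inE.
apply/negP => /andP [xe xS].
have [] := Nj_not hd hs hj (subsetP hS x xS); by rewrite xe.
Qed.

Lemma moment n d (s : seq {set 'I_n}) k : 2 <= d ->
  simplicial_order d (complete_clutter n d) s -> 0 < k ->
  \sum_(j < size s) 'C(#|Nj d s j|, k) = 'C(n, d.-1 + k).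
Proof.
move=> hd hs hk.
set r := size s.
pose P := [set p : 'I_r * {set 'I_n} | (p.2 \subset Nj d s p.1) && (#|p.2| == k)].
have E1 : \sum_(j < r) 'C(#|Nj d s j|, k) = #|P|.
  rewrite (eq_bigr (fun j : 'I_r => \sum_(S : {set 'I_n} | (S \subset Nj d s j) && (#|S| == k)) 1)).
    rewrite pair_big_dep /= sum1_card; apply: eq_card => p; by rewrite inE.
  move=> j _; rewrite -cards_draws sum1_card; apply: eq_card => S; by rewrite inE.
pose f := fun p : 'I_r * {set 'I_n} => es s p.1 :|: p.2.
have finj : {in P &, injective f}.
  have noninj : forall (j j' : 'I_r) (S S' : {set 'I_n}), j < j' ->
      S \subset Nj d s j -> #|S| = k -> S' \subset Nj d s j' ->
      es s j :|: S = es s j' :|: S' -> False.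
    move=> j j' S S' hjj hS hSk hS' hT.
    have : 0 < #|S| by rewrite hSk.
    rewrite card_gt0 => /set0Pn [x xS].
    have [xe xC] := Nj_not hd hs (ltn_ord j) (subsetP hS x xS).
    have FC : x |: es s j \in Cj d s j'.
      apply: (Nj_clique hs (ltn_ord j')).
        apply: (subset_trans _ (setUS _ hS')).
        by rewrite -hT subUset sub1set !inE xS orbT subsetUl.
      exact: Cj_card xC.
    have := Cj_avoid FC hjj (ltn_ord j); by rewrite subsetUr.
  move=> [j S] [j' S']; rewrite !inE /f /= => /andP [hS /eqP hSk] /andP [hS' /eqP hS'k] hT.
  case: (ltngtP j j') => hjj.
  - by case: (noninj _ _ _ _ hjj hS hSk hS' hT).
  - by case: (noninj _ _ _ _ hjj hS' hS'k hS (esym hT)).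
  - have ejj : j = j' by apply: val_inj.
    subst j'; congr pair.
    have hd1 := Nj_disj hd hs (ltn_ord j) hS.
    have hd2 := Nj_disj hd hs (ltn_ord j) hS'.
    apply/setP => x; move/setP: hT => /(_ x); rewrite !inE.
    move/setP: hd1 => /(_ x); move/setP: hd2 => /(_ x); rewrite !inE.
    by case: (x \in es s j); case: (x \in S); case: (x \in S').
have E3 : [set f p | p in P] = [set T : {set 'I_n} | #|T| == d.-1 + k].
  apply/setP => T; rewrite inE; apply/imsetP/eqP.
    move=> [[j S]]; rewrite inE /= => /andP [hS /eqP hSk] ->; rewrite /f /=.
    by rewrite cardsU (Nj_disj hd hs (ltn_ord j) hS) cards0 subn0 hSk (es_card hs (ltn_ord j)).
  move=> hT.
  have [F0 F0T F0c] : exists2 F0 : {set 'I_n}, F0 \subset T & #|F0| = d.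
    have : 0 < #|[set F0 : {set 'I_n} | F0 \subset T & #|F0| == d]|.
      rewrite cards_draws bin_gt0 hT.
      apply: (@leq_trans (d.-1 + 1)); first by rewrite addn1 prednK // ltnW.
      by rewrite leq_add2l.
    rewrite card_gt0 => /set0Pn [F0]; rewrite inE => /andP [h1 /eqP h2].
    by exists F0.
  have exP : exists j, (j < r) && (es s j \subset T).
    have [j hj ej] := cover_es hs F0c.
    by exists j; rewrite hj (subset_trans ej F0T).
  case: (ex_minnP exP) => j /andP [hj ejT] jmin.
  exists (Ordinal hj, T :\: es s j).
    rewrite inE /= cardsDS // hT (es_card hs hj) addKn eqxx andbT.
    apply/subsetP => x; rewrite !inE => /andP [xe xT].
    apply: Cj_intro; first by rewrite cardsU1 xe (es_card hs hj) add1n prednK // (ltnW hd).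
    move=> j' hj' hj's; apply/negP => hsub.
    have := jmin j'; rewrite hj's (subset_trans hsub) ?subUset ?sub1set ?xT ?ejT //.
    by move/(_ isT); rewrite leqNgt hj'.
  by rewrite /f /= -[LHS](setID T (es s j)) (setIidPr ejT).
have : #|[set T : {set 'I_n} | #|T| == d.-1 + k]| = 'C(n, d.-1 + k).
  by rewrite card_draws card_ord.
by move=> <-; rewrite -E3 (card_in_imset finj) E1.
Qed.

Lemma lam_sum n d (s : seq {set 'I_n}) k :
  \sum_(i < n.+1) lambda_of (complete_clutter n d) s i * 'C(i, k) =
  \sum_(j < size s) 'C(#|Nj d s j|, k).
Proof.
have hN : forall j, #|Nj d s j| < n.+1.
  by move=> j; rewrite ltnS -[X in _ <= X]card_ord max_card.
rewrite /lambda_of.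
rewrite (eq_bigr (fun i : 'I_n.+1 => \sum_(j <- iota 0 (size s)) ((#|Nj d s j| == i) * 'C(#|Nj d s j|, k)))); last first.
  move=> i _; rewrite -sum1_count big_distrl /= big_mkcond /=.
  apply: eq_bigr => j _; rewrite /order_N -/(Nj d s j).
  by case: eqP => [->|] //=; rewrite mul1n.
rewrite exchange_big /=.
have -> : iota 0 (size s) = index_iota 0 (size s) by rewrite /index_iota subn0.
rewrite big_mkord; apply: eq_bigr => j _.
rewrite (bigD1 (Ordinal (hN j))) //= eqxx mul1n big1 ?addn0 //.
move=> i hi; case: eqP => [h|]; last by rewrite mul0n.
by move: hi; rewrite -val_eqE /= h eqxx.
Qed.

Definition bform n d i := if (1 <= i) && (i <= n - d + 1) then 'C(n - 1 - i, d - 2) else 0.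

Lemma bform_mom n d k : 2 <= d -> d <= n -> 0 < k ->
  \sum_(i < n.+1) bform n d i * 'C(i, k) = 'C(n, d.-1 + k).
Proof.
move=> hd hdn hk.
rewrite big_ord_recr /= {2}/bform.
have -> : (1 <= n) && (n <= n - d + 1) = false by apply/negbTE; apply/nandP; right; rewrite -ltnNge; lia.
rewrite mul0n addn0.
have [m hm] : exists m, n = m.+1 by exists n.-1; lia.
rewrite (eq_bigr (fun i : 'I_n => 'C(m - i, d - 2) * 'C(i, k))).
  by rewrite hm vander; congr 'C(_, _); lia.
move=> i _; rewrite /bform; have hi := ltn_ord i.
case: ifP => /andP.
  by move=> [_ _]; congr (_ * _); congr 'C(_, _); lia.
move=> h; case: (posnP i) => [i0|ip].
  by rewrite i0 bin0n; move: hk; case: k => // k _; rewrite !muln0.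
rewrite (@bin_small (m - i)) ?mul0n //.
have : ~~ (i <= n - d + 1) by apply/negP => h'; apply: h; split.
lia.
Qed.

Lemma lambda_formula n d (s : seq {set 'I_n}) i : 2 <= d -> d <= n ->
  simplicial_order d (complete_clutter n d) s ->
  lambda_of (complete_clutter n d) s i = bform n d i.
Proof.
move=> hd hdn hs.
have hN : forall j, #|Nj d s j| <= n.
  by move=> j; rewrite -[X in _ <= X]card_ord max_card.
case: (posnP i) => [->|ip].
  rewrite /bform /= /lambda_of; apply/eqP; rewrite -leqn0 -sum1_count big1_seq //.
  move=> j /andP [/eqP hj]; rewrite mem_iota add0n => /(Nj_gt0 hd hs).
  by rewrite /order_N -/(Nj d s j) in hj; rewrite hj.
apply: (moment_uniq (M := n)) => // {ip i}.
  move=> i hi; split; last by rewrite /bform; case: ifP => // /andP [_ h]; lia.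
  apply/eqP; rewrite /lambda_of -leqn0 -sum1_count big1 //.
  move=> j /eqP hj; have := hN j; rewrite /order_N -/(Nj d s j) in hj.
  by rewrite hj => h; have := leq_ltn_trans h hi; rewrite ltnn.
move=> k hk; rewrite lam_sum (moment hd hs hk) bform_mom //.
Qed.

Definition mx n (e : {set 'I_n}) : nat := \max_(x in e) val x.

Definition s0 n d : seq {set 'I_n} :=
  sort (fun a b => mx a <= mx b)
    [seq e : {set 'I_n} <- enum [set: {set 'I_n}] | (#|e| == d.-1) && (mx e < n.-1)].

Lemma mem_s0 n d (e : {set 'I_n}) : (e \in s0 n d) = (#|e| == d.-1) && (mx e < n.-1).
Proof. by rewrite /s0 mem_sort mem_filter mem_enum in_setT andbT. Qed.

Lemma uniq_s0 n d : uniq (s0 n d).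
Proof. by rewrite /s0 sort_uniq filter_uniq // enum_uniq. Qed.

Lemma pw_s0 n d : pairwise (fun a b : {set 'I_n} => mx a <= mx b) (s0 n d).
Proof.
rewrite -sorted_pairwise; first by apply: sort_sorted => a b; exact: leq_total.
by move=> a b c; exact: leq_trans.
Qed.

Lemma take_le n d i (x : {set 'I_n}) : i < size (s0 n d) ->
  x \in take i (s0 n d) -> mx x <= mx (nth set0 (s0 n d) i).
Proof.
move=> hi hx; have hy : nth set0 (s0 n d) i \in drop i (s0 n d).
  by rewrite (drop_nth set0 hi) mem_head.
have H0 := pw_s0 n d; rewrite -(cat_take_drop i (s0 n d)) pairwise_cat in H0.
by case/and3P: H0 => /allrelP H _ _; apply: H.
Qed.

Lemma drop_ge n d i (x : {set 'I_n}) : i < size (s0 n d) ->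
  x \in s0 n d -> x \notin take i (s0 n d) -> mx (nth set0 (s0 n d) i) <= mx x.
Proof.
move=> hi hx hnx.
have hxd : x \in drop i (s0 n d).
  by move: hx; rewrite -{1}(cat_take_drop i (s0 n d)) mem_cat (negbTE hnx).
have H0 := pw_s0 n d; rewrite -(cat_take_drop i (s0 n d)) pairwise_cat in H0.
case/and3P: H0 => _ _; move: hxd; rewrite (drop_nth set0 hi) inE pairwise_cons.
case/orP => [/eqP -> //|hx' /andP [/allP H _]]; exact: H.
Qed.

Lemma nth_notin_take n d i : i < size (s0 n d) ->
  nth set0 (s0 n d) i \notin take i (s0 n d).
Proof.
move=> hi; have hy : nth set0 (s0 n d) i \in drop i (s0 n d).
  by rewrite (drop_nth set0 hi) mem_head.
have H0 := uniq_s0 n d; rewrite -(cat_take_drop i (s0 n d)) cat_uniq in H0.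
by case/and3P: H0 => _ /hasPn H _; apply: H.
Qed.

Lemma mx_le n (e : {set 'I_n}) x : x \in e -> val x <= mx e.
Proof. by move=> hx; apply: (leq_bigmax_cond (F := fun y : 'I_n => val y)). Qed.

Lemma mx_in n (e : {set 'I_n}) : 0 < #|e| -> exists2 M, M \in e & val M = mx e.
Proof.
move=> h; have [M hM hmx] := eq_bigmax_cond (fun y : 'I_n => val y) h.
by exists M => //; rewrite /mx hmx.
Qed.

Lemma mx_lt n (e : {set 'I_n}) M : 0 < M -> (forall x, x \in e -> val x < M) -> mx e < M.
Proof.
move=> hM H; rewrite -(prednK hM) ltnS; apply/bigmax_leqP => x hx.
by rewrite -ltnS prednK //; apply: H.
Qed.

Lemma simp_s0 n d i : 2 <= d -> d <= n -> i < size (s0 n d) ->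
  simplicial d (cdels (complete_clutter n d) (take i (s0 n d))) (nth set0 (s0 n d) i).
Proof.
move=> hd hdn hi.
set s := s0 n d; set e := nth set0 s i; set Ci := cdels _ _.
have es : e \in s by exact: mem_nth.
have /andP [/eqP ec em] : (#|e| == d.-1) && (mx e < n.-1) by rewrite -mem_s0.
have CiE : forall F : {set 'I_n}, (F \in Ci) = (#|F| == d) && all (fun e' : {set 'I_n} => ~~ (e' \subset F)) (take i s).
  by move=> F; rewrite /Ci cdelsE inE.
have K : forall F : {set 'I_n}, #|F| = d -> (forall x, x \in F -> val x <= mx e -> x \in e) -> F \in Ci.
  move=> F hF H; rewrite CiE hF eqxx /=; apply/allP => e' he'; apply/negP => sub.
  have hle := take_le hi he'.
  have e'e : e' \subset e.
    apply/subsetP => x xe'; apply: H; first exact: (subsetP sub x xe').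
    exact: leq_trans (mx_le xe') hle.
  have e's : e' \in s by apply: mem_take he'.
  have : e' = e.
    apply/eqP; rewrite eqEcard e'e ec /=; move: e's; rewrite mem_s0 => /andP [/eqP -> _] //.
  by move=> eq; have := nth_notin_take hi; rewrite -/s -/e -eq he'.
have e0 : 0 < #|e| by rewrite ec; lia.
have [M Me hM] := mx_in e0.
have Nlt : forall c, c \in nbh Ci e -> mx e < val c.
  move=> c; rewrite inE => hc.
  have hcard : #|c |: e| = d by move: hc; rewrite CiE => /andP [/eqP].
  have ce : c \notin e.
    apply/negP => ce; move: hcard; rewrite cardsU1 ce ec /=; lia.
  rewrite ltnNge; apply/negP => cle.
  have cM : val c < mx e.
    rewrite ltn_neqAle cle andbT -hM; apply/negP => /eqP/val_inj cM.
    by move: ce; rewrite cM Me.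
  set e'' := c |: (e :\ M).
  have e''c : #|e''| = d.-1.
    have := cardsD1 M e; rewrite Me ec /= => h.
    rewrite cardsU1 !inE (negbTE ce) andbF /=; lia.
  have e''mx : mx e'' < mx e.
    apply: mx_lt; first by lia.
    move=> x; rewrite !inE => /orP [/eqP -> //|/andP [xM xe]].
    rewrite ltn_neqAle mx_le // andbT -hM; apply: contra xM => /eqP h.
    by apply/eqP; apply: val_inj.
  have e''s : e'' \in s by rewrite mem_s0 e''c eqxx /=; exact: ltn_trans e''mx em.
  have e''t : e'' \in take i s.
    apply/negPn/negP => hn; have := drop_ge hi e''s hn; rewrite -/e leqNgt e''mx //.
  have := hc; rewrite CiE => /andP [_ /allP /(_ _ e''t)].
  by rewrite setUS // subD1set.
have n0 : n.-1 < n by lia.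
pose L : 'I_n := Ordinal n0.
apply/andP; split.
  rewrite /submaximal ec eqxx /=; apply/existsP; exists (L |: e).
  have Le : L \notin e by apply/negP => /mx_le /=; lia.
  rewrite subsetUr andbT; apply: K; first by rewrite cardsU1 Le ec; lia.
  move=> x; rewrite !inE => /orP [/eqP -> /=|//]; lia.
apply/forallP => F; apply/implyP => /andP [FK /eqP Fc]; apply: K => // x xF xle.
move: (subsetP FK x xF); rewrite in_setU => /orP [//|/Nlt]; lia.
Qed.

Lemma empty_s0 n d : 2 <= d -> d <= n ->
  cdels (complete_clutter n d) (s0 n d) = set0.
Proof.
move=> hd hdn; apply/setP => F; rewrite inE cdelsE inE.
apply/negP => /andP [/eqP Fc /allP H].
have F0 : 0 < #|F| by lia.
have [M MF hM] := mx_in F0.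
suff hs : F :\ M \in s0 n d by have := H _ hs; rewrite subD1set.
have h := cardsD1 M F; rewrite MF /= in h.
have Mlt : forall x, x \in F :\ M -> val x < val M.
  move=> x; rewrite !inE => /andP [xM xF]; rewrite ltn_neqAle hM mx_le // andbT.
  rewrite -hM; apply: contra xM => /eqP hx; by apply/eqP; apply: val_inj.
rewrite Fc in h.
have : 0 < #|F :\ M| by move: h; case: #|F :\ M|; lia.
rewrite card_gt0 => /set0Pn [y yF].
have := Mlt y yF => yM.
rewrite mem_s0; apply/andP; split; first by apply/eqP; move: h; case: #|F :\ M|; lia.
have := mx_lt (leq_ltn_trans (leq0n _) yM) Mlt; have := ltn_ord M; rewrite /=; lia.
Qed.

Theorem proposition4p7 (n d : nat) (hd : 2 <= d) (hnd : d <= n) :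
  chordal d (complete_clutter n d) /\
  (forall s, simplicial_order d (complete_clutter n d) s ->
   forall i : nat,
     lambda_of (complete_clutter n d) s i =
       (if (1 <= i) && (i <= n - d + 1) then 'C(n - 1 - i, d - 2) else 0)).
Proof.
split.
  exists (s0 n d); split; last exact: empty_s0.
  by move=> i hi; apply: simp_s0.
by move=> s hs i; rewrite (lambda_formula i hd hnd hs).
Qed.
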